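(* For every infinite sequence of integers $a_1,a_2,a_3,\dots$ there exists a rod set $R$ such that $F(n,R)=a_n$ for all $n\ge1$.
   Context: A rod is a triple $(r,c,\varepsilon)$ with $r$ a positive integer (its length), $c$ an arbitrary tag (a ''color''), and $\varepsilon\in\{+1,-1\}$ its sign; a rod of sign $-1$ is an antirod. A rod set is a set of rods with only finitely many rods of each length. A train built from $R$ is a finite sequence of rods of $R$, including the empty train; its length is the sum of the rod lengths and its sign the product of the rod signs. The net train count $F(n,R)$ is the number of positive trains of length $n$ built from $R$ minus the number of negative ones (so $F(0,R)=1$). *)

(* Defs.v *)
From mathcomp Require Import all_boot all_order all_algebra.
Set Implicit Arguments. Unset Strict Implicit. Unset Printing Implicit Defensive.
Import GRing.Theory Num.Theory.

(* A rod (r, c, eps): length r, colour c (colours taken in nat), sign eps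
   (true = +1, false = -1, i.e. an antirod). *)
Definition rod := (nat * nat * bool)%type.
Definition rod_len (x : rod) : nat := x.1.1.
Definition rod_sign (x : rod) : int := if x.2 then 1%R else (-1)%R.

Record rodset := RodSet {
  rods : nat -> seq rod;
  rods_len : forall r x, x \in rods r -> rod_len x = r;
  rods0 : rods 0 = [::];
  rods_uniq : forall r, uniq (rods r)
}.

(* All trains (finite sequences of rods of R) of total length n, enumerated
   by the first rod; [fuel] only bounds the recursion (fuel >= n suffices). *)
Fixpoint trains_aux (R : rodset) (fuel n : nat) : seq (seq rod) :=
  if n == 0 then [:: [::]] else
  match fuel with
  | 0 => [::]
  | f.+1 => flatten (map (fun k =>
              flatten (map (fun x => map (cons x) (trains_aux R f (n - k)))
                           (rods R k)))
            (iota 1 n))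
  end.

Definition trains (R : rodset) (n : nat) : seq (seq rod) := trains_aux R n n.

Definition train_len (t : seq rod) : nat := \sum_(x <- t) rod_len x.
Definition train_sign (t : seq rod) : int := (\prod_(x <- t) rod_sign x)%R.

Definition F (n : nat) (R : rodset) : int :=
  (\sum_(t <- trains R n) train_sign t)%R.

(* Main.v *)
Require Import Defs.
From mathcomp Require Import all_boot all_order all_algebra.
Set Implicit Arguments. Unset Strict Implicit. Unset Printing Implicit Defensive.
Import GRing.Theory Num.Theory.

Section S.
Variable a : nat -> int.
Local Open Scope ring_scope.

Definition A (n : nat) : int := if n is 0 then 1 else a n.

Fixpoint cs (n : nat) : seq int :=
  if n is m.+1 then
    rcons (cs m) (a m.+1 - \sum_(1 <= k < m.+1) nth 0 (cs m) k * a (m.+1 - k)%N)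
  else [:: 0].

Lemma size_cs n : size (cs n) = n.+1.
Proof. by elim: n => //= n IH; rewrite size_rcons IH. Qed.

Lemma nth_cs n k : (k <= n)%N -> nth 0 (cs n) k = nth 0 (cs k) k.
Proof.
elim: n => [|n IH]; first by rewrite leqn0 => /eqP ->.
rewrite leq_eqVlt => /orP [/eqP -> //|].
rewrite ltnS => Hk; rewrite /= nth_rcons size_cs ltnS Hk; exact: IH.
Qed.

Definition c k := nth 0 (cs k) k.

Lemma c_spec m : c m.+1 = a m.+1 - \sum_(1 <= k < m.+1) c k * a (m.+1 - k)%N.
Proof.
rewrite /c /= nth_rcons size_cs ltnn eqxx; congr (_ - _).
rewrite !big_nat; apply: eq_bigr => k /andP [_ Hk].
by rewrite nth_cs // -ltnS.
Qed.

Lemma key n : (1 <= n)%N -> \sum_(k <- iota 1 n) c k * A (n - k)%N = a n.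
Proof.
case: n => // m _.
have -> : iota 1 m.+1 = index_iota 1 m.+2 by rewrite /index_iota subSS subn0.
rewrite big_nat_recr //= subnn /= mulr1 c_spec.
have -> : \sum_(1 <= k < m.+1) c k * A (m.+1 - k)%N =
          \sum_(1 <= k < m.+1) c k * a (m.+1 - k)%N.
  rewrite !big_nat; apply: eq_bigr => k /andP [_ Hk].
  by rewrite /A; case E: (m.+1 - k)%N => //; move/eqP: E; rewrite subn_eq0 leqNgt Hk.
by rewrite addrC subrK.
Qed.

Definition rodsf (r : nat) : seq rod :=
  if r is 0 then [::] else [seq (r, i, (0 <= c r)) | i <- iota 0 `|c r|%N].

Lemma rodsf_len r x : x \in rodsf r -> rod_len x = r.
Proof. by case: r => //= r /mapP [i _ ->]. Qed.

Lemma rodsf_uniq r : uniq (rodsf r).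
Proof.
case: r => //= r; rewrite map_inj_uniq ?iota_uniq //.
by move=> i j [].
Qed.

Definition RR := RodSet rodsf_len (erefl _) rodsf_uniq.

Lemma iter_add (x : int) n : iter n (+%R x) 0 = x *+ n.
Proof. by elim: n => //= n ->; rewrite mulrS. Qed.

Lemma sum_iota_const (x : int) n : \sum_(j <- iota 0 n) x = x *+ n.
Proof. by rewrite big_const_seq count_predT size_iota iter_add. Qed.

Lemma sum_signs r : (1 <= r)%N -> \sum_(x <- rods RR r) rod_sign x = c r.
Proof.
case: r => // r _.
rewrite [rods _ _]/= big_map /rod_sign.
case: (boolP (0 <= c r.+1)) => H.
  transitivity ((1 : int) *+ `|c r.+1|%N); first exact: sum_iota_const.
  by rewrite natr_absz intz ger0_norm.
transitivity ((-1 : int) *+ `|c r.+1|%N); first exact: sum_iota_const.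
rewrite -Order.TotalTheory.ltNge in H.
by rewrite mulNrn natr_absz intz ltr0_norm // opprK.
Qed.

Lemma trains_auxS (R : rodset) f n : trains_aux R f.+1 n.+1 =
  flatten (map (fun k =>
              flatten (map (fun x => map (cons x) (trains_aux R f (n.+1 - k)))
                           (rods R k)))
            (iota 1 n.+1)).
Proof. by []. Qed.

Lemma main f n : (n <= f)%N -> \sum_(t <- trains_aux RR f n) train_sign t = A n.
Proof.
elim: f n => [|f IH] n.
  by rewrite leqn0 => /eqP -> /=; rewrite big_seq1 /train_sign big_nil.
case: n => [|m] Hm.
  by rewrite /= big_seq1 /train_sign big_nil.
rewrite trains_auxS big_flatten big_map; change (A m.+1) with (a m.+1); rewrite -key //.
apply: eq_big_seq => k; rewrite mem_iota => /andP [Hk1 Hk2].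
rewrite big_flatten big_map -(sum_signs Hk1) big_distrl.
apply: eq_bigr => x _.
rewrite big_map.
have -> : \sum_(t <- trains_aux RR f (m.+1 - k)) train_sign (x :: t) =
          rod_sign x * \sum_(t <- trains_aux RR f (m.+1 - k)) train_sign t.
  by rewrite big_distrr; apply: eq_bigr => t _; rewrite /train_sign big_cons.
have Hf : (m.+1 - k <= f)%N.
  rewrite leq_subLR; apply: leq_trans Hm _; rewrite -add1n leq_add2r; exact: Hk1.
rewrite (IH _ Hf); reflexivity.
Qed.

End S.

Theorem theorem2 (a : nat -> int) :
  exists R : rodset, forall n : nat, (1 <= n)%N -> F n R = a n.
Proof.
exists (RR a) => n Hn.
rewrite /F /trains (@main a n n (leqnn n)).
case: n Hn => [|n] Hn; first by [].
reflexivity.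
Qed.
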